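(* Let $X$ be a vector space with a separating family of seminorms $\{p_k\}_{k\in\mathbb{N}}$, equipped with the metric $d(x,y)=\max_{k\in\mathbb{N}}\Big\{2^{-k}\frac{p_k(x-y)}{1+p_k(x-y)}\Big\}$, and assume $(X,d)$ is complete. Let $\{A_n\}$ be an approximation scheme on $X$. Assume that there exist $(M_k)\subset[0,\infty)$, an infinite set $\mathbb{N}_0\subseteq\mathbb{N}$, elements $\{x_n\}_{n\in\mathbb{N}_0}\subseteq X$, $m_0\in\mathbb{N}$ and $\delta>0$ such that: (a) $p_k(x_n)\le M_k$ for all $k\in\mathbb{N}$ and $n\in\mathbb{N}_0$; (b) $E_{m_0}(x_n,A_n):=\inf_{a\in A_n}p_{m_0}(x_n-a)>\delta$ for all $n\in\mathbb{N}_0$. Then $\{A_n\}$ satisfies Shapiro's theorem on $X$.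
   Context: An approximation scheme on $X$ is a chain $A_0\subsetneq A_1\subsetneq\cdots\subsetneq X$ of subsets with: (A1) there is $K:\mathbb{N}\to\mathbb{N}$, $K(n)\ge n$, $A_n+A_n\subseteq A_{K(n)}$; (A2) $\lambda A_n\subseteq A_n$ for all scalars $\lambda$; (A3) $\bigcup_nA_n$ dense in $X$. $E(x,A)=\inf_{a\in A}d(x,a)$. $\{A_n\}$ satisfies Shapiro's theorem on $X$ if for every non-increasing sequence $\{\varepsilon_n\}$ of nonnegative reals tending to $0$ there exists $x\in X$ with $E(x,A_n)\neq\mathbf{O}(\varepsilon_n)$. *)

(* Defs.v *)
From HB Require Import structures.
From mathcomp Require Import all_boot all_order all_algebra.
From mathcomp Require Import all_classical all_reals.
Set Implicit Arguments. Unset Strict Implicit. Unset Printing Implicit Defensive.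
Import Order.TTheory GRing.Theory Num.Theory.
Local Open Scope classical_set_scope.
Local Open Scope ring_scope.

Section Defs.
Variables (R : realType) (X : lmodType R).

Definition seminorm (p : X -> R) : Prop :=
  (forall x y, p (x + y) <= p x + p y) /\
  (forall (l : R) x, p (l *: x) = `|l| * p x).

Definition separating (p : nat -> X -> R) : Prop :=
  forall x, (forall k, p k x = 0) -> x = 0.

(* d(x,y) = max_k 2^-k p_k(x-y)/(1+p_k(x-y)); the max is attained, so it equals the sup *)
Definition fdist (p : nat -> X -> R) (x y : X) : R :=
  sup [set (2%:R ^- k) * (p k (x - y) / (1 + p k (x - y))) | k in [set: nat]].

Definition d_complete (p : nat -> X -> R) : Prop :=
  forall u : nat -> X,
    (forall e : R, 0 < e -> exists N, forall m n, (N <= m)%N -> (N <= n)%N ->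
        fdist p (u m) (u n) < e) ->
    exists x : X, forall e : R, 0 < e -> exists N, forall n, (N <= n)%N ->
        fdist p (u n) x < e.

Definition approx_scheme (p : nat -> X -> R) (A : nat -> set X) : Prop :=
  (forall n, A n `<` A n.+1) /\
  (exists K : nat -> nat, (forall n, (n <= K n)%N) /\
      forall n a b, A n a -> A n b -> A (K n) (a + b)) /\
  (forall n (l : R) a, A n a -> A n (l *: a)) /\
  (forall (x : X) (e : R), 0 < e -> exists n a, A n a /\ fdist p x a < e).

Definition Edist (p : nat -> X -> R) (x : X) (A : set X) : R :=
  inf [set fdist p x a | a in A].

Definition bigO_seq (u v : nat -> R) : Prop :=
  exists C : R, exists N, forall n, (N <= n)%N -> `|u n| <= C * `|v n|.

Definition shapiro (p : nat -> X -> R) (A : nat -> set X) : Prop :=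
  forall eps : nat -> R,
    (forall n, 0 <= eps n) -> (forall n, eps n.+1 <= eps n) ->
    (forall e : R, 0 < e -> exists N, forall n, (N <= n)%N -> eps n < e) ->
    exists x : X, ~ bigO_seq (fun n => Edist p x (A n)) eps.

Definition Eseminorm (p : nat -> X -> R) (m : nat) (x : X) (A : set X) : R :=
  inf [set p m (x - a) | a in A].

End Defs.

(* Main.v *)
Require Import Defs.
From HB Require Import structures.
From mathcomp Require Import all_boot all_order all_algebra.
From mathcomp Require Import all_classical all_reals.
From mathcomp Require Import lra.
Import Order.TTheory GRing.Theory Num.Theory Num.Def.
Local Open Scope classical_set_scope.
Local Open Scope ring_scope.
Set Implicit Arguments. Unset Strict Implicit.

Section Semi.
Variables (R : realType) (X : lmodType R) (q : X -> R).
Hypothesis hq : seminorm q.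

Lemma sn0 : q 0 = 0.
Proof. by case: hq => _ hZ; rewrite -(scale0r 0) hZ normr0 mul0r. Qed.

Lemma snN x : q (- x) = q x.
Proof. by case: hq => _ hZ; rewrite -scaleN1r hZ normrN normr1 mul1r. Qed.

Lemma sn_ge0 x : 0 <= q x.
Proof.
case: hq => hD _; have := hD x (- x); rewrite subrr sn0 snN; lra.
Qed.

Lemma snD x y : q (x + y) <= q x + q y.
Proof. by case: hq. Qed.

Lemma snZ (l : R) x : q (l *: x) = `|l| * q x.
Proof. by case: hq. Qed.

Lemma snB x y : q x - q y <= q (x - y).
Proof. have := snD (x - y) y; rewrite subrK; lra. Qed.
End Semi.

Section Tw.
Variable R : realType.
Lemma tw_gt0 k : 0 < (2%:R : R) ^- k.
Proof. by rewrite invr_gt0 exprn_gt0. Qed.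
Lemma twS k : (2%:R : R) ^- k.+1 = 2%:R ^- k / 2.
Proof. by rewrite exprSr invfM. Qed.
Lemma tw_le m n : (m <= n)%N -> (2%:R : R) ^- n <= 2%:R ^- m.
Proof.
move=> mn; rewrite -(subnKC mn); elim: (n - m)%N => [|d IH]; first by rewrite addn0.
rewrite addnS twS; have := tw_gt0 (m + d); lra.
Qed.
Lemma tw_le1 k : (2%:R : R) ^- k <= 1.
Proof. by have := @tw_le 0 k (leq0n k); rewrite expr0 invr1. Qed.

Lemma phi_ge0 (t : R) : 0 <= t -> 0 <= t / (1 + t).
Proof. move=> *; apply: divr_ge0; lra. Qed.
Lemma phi_le (t : R) : 0 <= t -> t / (1 + t) <= t.
Proof. move=> *; rewrite ler_pdivrMr; [nra|lra]. Qed.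
Lemma phi_le1 (t : R) : 0 <= t -> t / (1 + t) <= 1.
Proof. move=> *; rewrite ler_pdivrMr; lra. Qed.
Lemma phi_lb (t0 t : R) : 0 <= t0 -> t0 <= 1 -> t0 <= t -> t0 / 2 <= t / (1 + t).
Proof. move=> *; rewrite ler_pdivlMr; last lra. rewrite mulrAC ler_pdivrMr; nra. Qed.
Lemma phi_inv (t e : R) : 0 <= t -> e <= 1/2 -> t / (1 + t) < e -> t < 2 * e.
Proof. move=> ? ?; rewrite ltr_pdivrMr; nra. Qed.
End Tw.

Section Fd.
Variables (R : realType) (X : lmodType R) (p : nat -> X -> R).
Hypothesis hp : forall k, seminorm (p k).

Definition term (v : X) k := (2%:R : R) ^- k * (p k v / (1 + p k v)).

Lemma term_ge0 v k : 0 <= term v k.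
Proof. apply: mulr_ge0; [exact/ltW/tw_gt0|apply: phi_ge0; exact: sn_ge0]. Qed.
Lemma term_le_tw v k : term v k <= 2%:R ^- k.
Proof.
rewrite /term; have := tw_gt0 R k; have := phi_le1 (sn_ge0 (hp k) v);
have := phi_ge0 (sn_ge0 (hp k) v); nra.
Qed.
Lemma term_le_p v k : term v k <= p k v.
Proof.
rewrite /term; have := tw_le1 R k; have := tw_gt0 R k; have := phi_le (sn_ge0 (hp k) v);
have := phi_ge0 (sn_ge0 (hp k) v); nra.
Qed.

Lemma fd_ge x y k : term (x - y) k <= fdist p x y.
Proof.
apply: ub_le_sup; last by exists k.
exists 1 => z [j _ <-]; have := term_le_tw (x - y) j; have := tw_le1 R j.
rewrite /term; lra.
Qed.

Lemma fd_le x y b : (forall k, term (x - y) k <= b) -> fdist p x y <= b.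
Proof.
move=> h; apply: ge_sup; first by exists (term (x - y) 0); exists 0%N.
by move=> z [j _ <-]; exact: h.
Qed.
End Fd.

Lemma decomp (R : pzRingType) (X : lmodType R) (x0 b s a y : X) :
  x0 - b = (x0 - (s + y)) + ((s - a) + (y - (b - a))).
Proof.
rewrite opprB (addrCA (s - a)) (addrA (s - a)) subrK opprD.
by rewrite addrA (addrA x0) (addrA (x0 - s - y)) (addrA _ y s) !subrK.
Qed.

Fixpoint seqrec (T : Type) (z : T) (f : nat -> T -> T) (n : nat) : T :=
  if n is n'.+1 then f n' (seqrec z f n') else z.

Fixpoint Ssum (R : realType) (M : nat -> R) (j : nat) : R :=
  if j is j'.+1 then Ssum M j' + M j else 1 + M 0%N.

Section SS.
Variables (R : realType) (M : nat -> R).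
Hypothesis hM : forall k, 0 <= M k.
Lemma Ssum_ge1 j : 1 <= Ssum M j.
Proof. elim: j => [|j IH] /=; [have := hM 0%N; lra|have := hM j.+1; lra]. Qed.
Lemma Ssum_S j : Ssum M j <= Ssum M j.+1.
Proof. by rewrite /=; have := hM j.+1; lra. Qed.
Lemma Ssum_ge k j : (k <= j)%N -> 1 + M k <= Ssum M j.
Proof.
elim: j => [|j IH]; first by rewrite leqn0 => /eqP ->.
rewrite leq_eqVlt => /orP [/eqP ->|/IH h] /=; have := Ssum_ge1 j; have := hM j.+1; lra.
Qed.
End SS.

Lemma div_le (R : realType) (a b b' : R) : 0 <= a -> 0 < b' -> b' <= b -> a / b <= a / b'.
Proof.
move=> ha hb' hb; rewrite ler_pdivrMr; last lra.
rewrite mulrAC ler_pdivlMr //; nra.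
Qed.

Lemma fd_small (R : realType) (X : lmodType R) (p : nat -> X -> R)
  (hp : forall k, seminorm (p k)) u v m (t : R) :
  0 < t -> fdist p u v < 2%:R ^- m * minr (1/2) t -> p m (u - v) < 2 * t.
Proof.
move=> ht h; have := fd_ge hp u v m; rewrite /term => h2.
have h3 : p m (u - v) / (1 + p m (u - v)) < minr (1/2) t.
  by rewrite -(ltr_pM2l (tw_gt0 R m)); apply: le_lt_trans h2 h.
have hmin1 : minr (1/2) t <= 1/2 by rewrite ge_min lexx.
have hmin2 : minr (1/2) t <= t by rewrite ge_min lexx orbT.
have := phi_inv (sn_ge0 (hp m) (u - v)) hmin1 h3; lra.
Qed.

Lemma minpos (R : realType) (t : R) : 0 < t -> 0 < minr (1/2) t.
Proof. by move=> ht; rewrite lt_min ht andbT; lra. Qed.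
Theorem mainTheorem5 (R : realType) (X : lmodType R) (p : nat -> X -> R)
  (A : nat -> set X) (M : nat -> R) (N0 : set nat) (x : nat -> X)
  (m0 : nat) (delta : R) :
  (forall k, seminorm (p k)) -> separating p -> d_complete p ->
  approx_scheme p A ->
  (forall k, 0 <= M k) -> infinite_set N0 -> 0 < delta ->
  (forall k n, N0 n -> p k (x n) <= M k) ->
  (forall n, N0 n -> delta < Eseminorm p m0 (x n) (A n)) ->
  shapiro p A.
Proof.
move=> hp _ hcomp [hchain [[K [hK hKadd]] [hscal hdense]]] hM hN0 hdel hxM hxE.
move=> eps eps0 epsdec epslim.
have hmono : forall i j, (i <= j)%N -> A i `<=` A j.
  move=> i j ij; rewrite -(subnKC ij); elim: (j - i)%N => [|d IH]; first by rewrite addn0.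
  by rewrite addnS; apply: subset_trans IH (properW (hchain _)).
set d' := minr delta 1.
have d'pos : 0 < d' by rewrite lt_min hdel ltr01.
have d'le1 : d' <= 1 by rewrite ge_min lexx orbT.
have d'le : d' <= delta by rewrite ge_min lexx.
have hM0 := hM m0.
set rho := d' / (16 * (1 + M m0)).
have rpos : 0 < rho by apply: divr_gt0 => //; lra.
have rle : rho <= 1/16.
  rewrite /rho ler_pdivrMr; lra.
have rM : rho * M m0 <= d' / 16.
  rewrite /rho mulrAC ler_pdivrMr; last lra.
  rewrite mulrAC; nra.
set c := fun j => rho ^+ j.+1 / Ssum M j.
have Spos : forall j, 0 < Ssum M j by move=> j; have := Ssum_ge1 hM j; lra.
have cpos : forall j, 0 < c j by move=> j; apply: divr_gt0; [exact: exprn_gt0|exact: Spos].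
have crho : forall j, c j.+1 <= rho * c j.
  move=> j; rewrite /c exprS -mulrA; apply: ler_wpM2l; first lra.
  apply: div_le; [exact/ltW/exprn_gt0|exact: Spos|exact: Ssum_S].
have chalf : forall j, 2 * c j.+1 <= c j.
  by move=> j; have := crho j; have := cpos j; nra.
have cM : forall j, c j.+1 * M m0 <= c j * d' / 16.
  by move=> j; have := crho j; have := cpos j; nra.
have rtw : forall j, rho ^+ j.+1 <= 2%:R ^- j.+1.
  elim=> [|j IH]; first by rewrite expr1 expr1; lra.
  by rewrite exprS twS; have := exprn_gt0 j.+1 rpos; nra.
have cS : forall k j, (k <= j)%N -> c j * (1 + M k) <= rho ^+ j.+1.
  move=> k j kj; rewrite /c mulrAC ler_pdivrMr ?Spos //.
  have := Ssum_ge hM kj; have := exprn_gt0 j.+1 rpos; nra.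
have cb : forall k j, (k <= j)%N -> 2 * c j * M k <= 2%:R ^- j.
  move=> k j kj; have := cS k j kj; have := rtw j; rewrite twS.
  have := hM k; have := cpos j; nra.
have cle1 : forall j, c j <= 1.
  move=> j; have := cS 0%N j (leq0n j); have := rtw j; have := tw_le1 R j.+1.
  have := hM 0%N; have := cpos j; nra.
set kap := fun j => 2%:R ^- m0 * (c j * d' / 4).
have kpos : forall j, 0 < kap j.
  by move=> j; apply: mulr_gt0; [exact: tw_gt0|have := cpos j; nra].
have step : forall (j : nat) (s : X), exists q : nat * nat,
  [/\ N0 q.2, (j <= q.1)%N, (K q.1 <= q.2)%N, (j.+1)%:R * eps q.1 < kap j &
      exists a, A q.1 a /\ p m0 (s - a) <= c j * d' / 8].
  move=> j s.
  have e'pos : 0 < c j * d' / 16 by have := cpos j; nra.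
  have [m [a [Ama fsa]]] := hdense s _ (mulr_gt0 (tw_gt0 R m0) (minpos e'pos)).
  have pa := fd_small hp e'pos fsa.
  have [N1 hN1] := epslim (kap j / (j.+1)%:R) (divr_gt0 (kpos j) (ltr0Sn _ _)).
  set n' := maxn (maxn m j) N1.
  have [nj [hnj1 hnj2]] : exists nj, N0 nj /\ (K n' <= nj)%N.
    have [nj [h1 h2]] := infinite_setN0 (infinite_setD hN0 (finite_II (K n'))).
    by exists nj; split => //; rewrite leqNgt; apply/negP.
  exists (n', nj); split => //=.
  - by rewrite leq_max leq_maxr.
  - by rewrite -ltr_pdivlMl ?ltr0Sn // mulrC hN1 // leq_maxr.
  - exists a; split; last lra.
    by apply: hmono Ama; rewrite leq_max leq_max leqnn.
pose g := fun j s => projT1 (cid (step j s)).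
have hg : forall j s, _ := fun j s => projT2 (cid (step j s)).
pose s := seqrec 0 (fun j y => y + c j *: x (g j y).2).
have sS : forall j, s j.+1 = s j + c j *: x (g j (s j)).2 by [].
have tail : forall k m n, (m <= n)%N -> p k (s n - s m) <= 2 * c m * M k.
  move=> k m n mn; rewrite -(subnKC mn).
  suff : forall d, p k (s (m + d)%N - s m) <= 2 * (c m - c (m + d)%N) * M k.
    by move=> /(_ (n - m)%N) h; apply: le_trans h _; have := cpos (m + (n - m))%N; have := hM k; nra.
  elim=> [|d IH]; first by rewrite addn0 subrr sn0 //; lra.
  rewrite addnS sS addrAC; apply: le_trans (snD (hp k) _ _) _.
  rewrite snZ // ger0_norm; last exact/ltW/cpos.
  case: (hg (m + d)%N (s (m + d)%N)) => hN0n _ _ _ _.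
  have := hxM k _ hN0n; have := chalf (m + d)%N; have := cpos (m + d)%N; have := hM k.
  have := cpos (m + d).+1; nra.
have cauchy : forall e : R, 0 < e -> exists N, forall m n, (N <= m)%N -> (N <= n)%N ->
    fdist p (s m) (s n) < e.
  move=> e he; exists (Num.bound e^-1) => m n hm hn.
  have h2 : 2%:R ^- (Num.bound e^-1) < e.
    have := upper_nthrootP (leqnn (Num.bound e^-1)).
    by rewrite -ltf_pV2 ?posrE ?invr_gt0 ?exprn_gt0 // invrK.
  apply: le_lt_trans h2; apply: fd_le => // k.
  have [Nk|kN] := leqP k (Num.bound e^-1).
  - apply: le_trans (term_le_p hp _ _) _.
    have [mn|nm] := leqP m n.
    + rewrite -snN // opprB; apply: le_trans (tail _ _ _ mn) _.
      by apply: le_trans (cb _ _ (leq_trans Nk hm)) _; apply: tw_le.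
    + apply: le_trans (tail _ _ _ (ltnW nm)) _.
      by apply: le_trans (cb _ _ (leq_trans Nk hn)) _; apply: tw_le.
  - by apply: le_trans (term_le_tw hp _ _) _; apply: tw_le; apply: ltnW.
have [x0 hx0] := hcomp s cauchy.
have key : forall j b, A (g j (s j)).1 b -> c j * d' / 2 <= p m0 (x0 - b).
  move=> j b Ab.
  case: (hg j (s j)) => N0nj jn' Kn' epsn' [a [Aa pa]].
  set n' := (g j (s j)).1 in Ab Aa Kn' jn' epsn'.
  set nj := (g j (s j)).2 in N0nj Kn'.
  have e'pos : 0 < c j * d' / 16 by have := cpos j; nra.
  have near : p m0 (x0 - s j.+1) <= c j * d' / 4.
    have [N hN] := hx0 _ (mulr_gt0 (tw_gt0 R m0) (minpos e'pos)).
    have h1 := fd_small hp e'pos (hN (maxn N j.+1) (leq_maxl _ _)).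
    have h2 := tail m0 j.+1 (maxn N j.+1) (leq_maxr _ _).
    have -> : x0 - s j.+1 = (x0 - s (maxn N j.+1)) + (s (maxn N j.+1) - s j.+1).
      by rewrite addrA subrK.
    apply: le_trans (snD (hp m0) _ _) _.
    rewrite -(snN (hp m0) (x0 - _)) opprB.
    have := cM j; lra.
  have Anjba : A nj ((c j)^-1 *: (b - a)).
    apply: (hscal); apply: (hmono _ _ Kn'); apply: (hKadd) => //.
    by rewrite -scaleN1r; apply: (hscal).
  have hE := hxE nj N0nj.
  have hlb : delta < p m0 (x nj - (c j)^-1 *: (b - a)).
    apply: lt_le_trans hE _; apply: ge_inf; last by exists ((c j)^-1 *: (b - a)).
    by exists 0 => z [w _ <-]; exact: sn_ge0.
  have hT3 : c j * d' <= p m0 (c j *: x nj - (b - a)).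
    have -> : c j *: x nj - (b - a) = c j *: (x nj - (c j)^-1 *: (b - a)).
      by rewrite scalerBr scalerA mulfV ?scale1r //; apply/lt0r_neq0/cpos.
    rewrite snZ // ger0_norm; last exact/ltW/cpos.
    have := cpos j; nra.
  rewrite (decomp x0 b (s j) a (c j *: x nj)) -/nj -(sS j) addrA.
  set T1 := x0 - s j.+1. set T2 := s j - a. set T3 := c j *: x nj - (b - a).
  have := snB (hp m0) T3 (- (T1 + T2)); rewrite opprK snN // (addrC T3).
  have := snD (hp m0) T1 T2.
  have := cpos j; lra.
have Elb : forall j, kap j <= Edist p x0 (A (g j (s j)).1).
  move=> j; case: (hg j (s j)) => _ _ _ _ [a [Aa _]].
  apply: lb_le_inf; first by exists (fdist p x0 a); exists a.
  move=> z [b Ab <-]; apply: le_trans (fd_ge hp x0 b m0); rewrite /term /kap.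
  apply: ler_wpM2l; first exact/ltW/tw_gt0.
  have h := key j b Ab.
  have := phi_lb (t0 := c j * d' / 2) (t := p m0 (x0 - b)).
  have := cpos j; have := cle1 j.
  move=> h1 h2 h3; have := h3 ltac:(nra) ltac:(nra) h; lra.
exists x0 => -[C [N hCN]].
set j := maxn N (Num.bound `|C|).
case: (hg j (s j)) => _ jn' _ epsn' _.
set n' := (g j (s j)).1 in jn' epsn'.
have := hCN n' (leq_trans (leq_maxl _ _) jn').
have hC : `|C| <= j%:R.
  apply: le_trans (ltW (archi_boundP (normr_ge0 C))) _.
  by rewrite ler_nat leq_maxr.
have := Elb j; rewrite -/n' => hE.
rewrite (ger0_norm (eps0 n')) => hO.
have hEabs := ler_norm (Edist p x0 (A n')).
have hCC := ler_norm C.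
have := eps0 n'; rewrite -natr1 in epsn'.
nra.
Qed.
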